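(* There is a constant $c$ such that the following holds. Let $x\in\{0,1\}^n$ and let $A$ be a finite set with $x\in A$ and $CT(A\mid x)\le\epsilon$. Then there exist a finite set $A_1$ and a finite partition $\mathcal{A}$ with $C(\mathcal{A})\le\epsilon+c\log n$ such that: 1) $x\in A_1$ and $CT(A_1\mid x)\le\epsilon+c\log n$; 2) $CT(A\mid A_1)<\epsilon+c\log n$ and $CT(A_1\mid A)<\epsilon+c\log n$; 3) $|A_1|\le|A|$; 4) $A_1\in\mathcal{A}$.
   Context: Strings are binary; $C$ is plain Kolmogorov complexity w.r.t. a fixed universal decompressor $D$; finite sets and finite families of finite sets have complexity defined via fixed computable encodings. $CT(y\mid x)$ is the minimal length of a program $p$ such that $D(p,z)$ is defined for all $z$ and $D(p,x)=y$ (with sets replaced by their codes). A family $\mathcal{A}$ of sets is a partition if for all $A',A''\in\mathcal{A}$, $A'\cap A''\ne\varnothing$ implies $A'=A''$. *)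

(* Defs.v *)
From HB Require Import structures.
From mathcomp Require Import all_boot.
From mathcomp Require Import finmap.

Set Implicit Arguments.
Unset Strict Implicit.
Unset Printing Implicit Defensive.


(* A model of computation: codes of (mu-)recursive functions on nat,   *)
(* with a fuel-indexed evaluator.  Arguments are passed as a list of   *)
(* naturals; missing arguments read as 0.                              *)

Inductive rcode : Type :=
| RZero : rcode
| RSucc : rcode                       (* x0 + 1 *)
| RProj : nat -> rcode                (* x_i *)
| RComp : rcode -> seq rcode -> rcode (* f (g1 v, ..., gm v) *)
| RPrec : rcode -> rcode -> rcode     (* primitive recursion on x0 *)
| RMu   : rcode -> rcode.             (* least m with f (m :: v) = 0 *)

Fixpoint opt_all (s : seq (option nat)) : option (seq nat) :=
  match s with
  | [::] => Some [::]
  | o :: s' => match o, opt_all s' with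
               | Some a, Some l => Some (a :: l)
               | _, _ => None
               end
  end.

Fixpoint reval (k : nat) (c : rcode) (v : seq nat) : option nat :=
  match k with
  | 0 => None
  | k'.+1 =>
    match c with
    | RZero => Some 0
    | RSucc => Some (nth 0 v 0).+1
    | RProj i => Some (nth 0 v i)
    | RComp f gs =>
        match opt_all (map (fun g => reval k' g v) gs) with
        | Some w => reval k' f w
        | None => None
        end
    | RPrec f g =>
        let n := nth 0 v 0 in
        let r := behead v in
        (fix loop (i : nat) : option nat :=
           match i with
           | 0 => reval k' f r
           | i'.+1 => match loop i' with
                      | Some h => reval k' g (i' :: h :: r)
                      | None => None
                      end
           end) n
    | RMu f =>
        (fix search (m fuel : nat) : option nat :=
           match fuel with
           | 0 => None
           | fuel'.+1 => match reval k' f (m :: v) with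
                         | Some 0 => Some m
                         | Some _ => search m.+1 fuel'
                         | None => None
                         end
           end) 0 k'
    end
  end.

(* Bijection between binary strings and naturals:
   s |-> (number with binary expansion 1s) - 1. *)
Definition nat_of_str (s : seq bool) : nat :=
  (foldl (fun acc (b : bool) => (acc.*2 + b)%N) 1 s).-1.

Definition computes (c : rcode)
    (F : seq bool -> seq bool -> option (seq bool)) : Prop :=
  forall p x y, F p x = Some y <->
    exists k, reval k c [:: nat_of_str p; nat_of_str x] = Some (nat_of_str y).

Definition computable (F : seq bool -> seq bool -> option (seq bool)) :=
  exists c, computes c F.

Definition universal (D : seq bool -> seq bool -> option (seq bool)) : Prop :=
  computable D /\
  forall F, computable F ->
    exists k, forall p, exists p',
      size p' <= size p + k /\ forall z, D p' z = F p z.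

(* Kolmogorov complexities (expressed through bounds: "C <= m" iff     *)
(* some program of length <= m exists, which is exactly the meaning    *)
(* of the minimum).                                                    *)

(* Plain complexity C(y) = C(y | empty string). *)
Definition C_le (D : seq bool -> seq bool -> option (seq bool)) (y : seq bool) (m : nat) : Prop :=
  exists p, size p <= m /\ D p [::] = Some y.

Definition total_prog (D : seq bool -> seq bool -> option (seq bool)) (p : seq bool) :=
  forall z, D p z <> None.

Definition CT_le (D : seq bool -> seq bool -> option (seq bool)) (y x : seq bool) (m : nat) : Prop :=
  exists p, size p <= m /\ total_prog D p /\ D p x = Some y.

Definition CT_lt (D : seq bool -> seq bool -> option (seq bool)) (y x : seq bool) (m : nat) : Prop :=
  exists p, size p < m /\ total_prog D p /\ D p x = Some y.

Local Open Scope fset_scope.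

(* self-delimiting code of a string: bits doubled, then 01 *)
Definition enc_str (s : seq bool) : seq bool :=
  flatten [seq [:: b; b] | b <- s] ++ [:: false; true].

Definition enc_list (l : seq (seq bool)) : seq bool :=
  flatten (map enc_str l).

Fixpoint lexle (s t : seq bool) : bool :=
  match s, t with
  | [::], _ => true
  | _ :: _, [::] => false
  | a :: s', b :: t' => (a < b) || ((a == b) && lexle s' t')
  end.

Definition shortlex (s t : seq bool) : bool :=
  (size s < size t) || ((size s == size t) && lexle s t).

Definition code_set (A : {fset seq bool}) : seq bool :=
  enc_list (sort shortlex A).

Definition code_fam (F : {fset {fset seq bool}}) : seq bool :=
  enc_list (sort shortlex [seq code_set A | A <- F]).

Definition is_partition (F : {fset {fset seq bool}}) : Prop :=
  forall A' A'', A' \in F -> A'' \in F -> A' `&` A'' != fset0 -> A' = A''.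

(* log n, normalized to be >= 1 (the "c log n" slack term) *)
Definition clog (n : nat) : nat := (trunc_log 2 n).+1.

(* Main.v *)
Require Import Defs.
From mathcomp Require Import all_boot.
From mathcomp Require Import finmap.
From mathcomp Require Import zify.
From Stdlib Require Import ClassicalEpsilon.
Set Implicit Arguments. Unset Strict Implicit. Unset Printing Implicit Defensive.

Fixpoint mu_search (e : seq nat -> option nat) (v : seq nat) (m fuel : nat) : option nat :=
  match fuel with
  | 0 => None
  | fuel'.+1 => match e (m :: v) with
                | Some 0 => Some m
                | Some _ => mu_search e v m.+1 fuel'
                | None => None
                end
  end.

Fixpoint prec_loop (ef eg : seq nat -> option nat) (r : seq nat) (i : nat) : option nat :=
  match i with
  | 0 => ef r
  | i'.+1 => match prec_loop ef eg r i' with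
             | Some h => eg (i' :: h :: r)
             | None => None
             end
  end.

Lemma reval_mu k f v : reval k.+1 (RMu f) v = mu_search (reval k f) v 0 k.
Proof.
have H : forall fu m, (fix search (m fuel : nat) : option nat :=
           match fuel with
           | 0 => None
           | fuel'.+1 => match reval k f (m :: v) with
                         | Some 0 => Some m
                         | Some _ => search m.+1 fuel'
                         | None => None
                         end
           end) m fu = mu_search (reval k f) v m fu.
  by elim=> //= fu IH m; rewrite IH.
exact: (H k 0).
Qed.
Lemma reval_prec k f g v : reval k.+1 (RPrec f g) v =
  prec_loop (reval k f) (reval k g) (behead v) (nth 0 v 0).
Proof. by rewrite /=; elim: (nth 0 v 0) => //= i ->. Qed.
Lemma reval_comp k f gs v : reval k.+1 (RComp f gs) v =
  match opt_all (map (fun g => reval k g v) gs) with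
        | Some w => reval k f w | None => None end.
Proof. reflexivity. Qed.

Lemma opt_all_mono (e1 e2 : rcode -> option nat) gs w :
  (forall g y, e1 g = Some y -> e2 g = Some y) ->
  opt_all (map e1 gs) = Some w -> opt_all (map e2 gs) = Some w.
Proof.
move=> H; elim: gs w => //= g gs IH w.
case E1: (e1 g) => [a|] //; case E2: (opt_all (map e1 gs)) => [l|] // [<-].
by rewrite (H _ _ E1) (IH _ E2).
Qed.

Lemma reval_mono k c v y : reval k c v = Some y -> reval k.+1 c v = Some y.
Proof.
elim: k c v y => [//|k IH] c v y.
case: c => [||i|f gs|f g|f].
- by [].
- by [].
- by [].
- rewrite !reval_comp.
  case E: (opt_all _) => [w|] //.
  rewrite (opt_all_mono (e1 := fun g => reval k g v) (e2 := fun g => reval k.+1 g v) _ E); last first.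
    by move=> g' y'; apply: IH.
  exact: IH.
- rewrite !reval_prec.
  suff H : forall i y, prec_loop (reval k f) (reval k g) (behead v) i = Some y ->
             prec_loop (reval k.+1 f) (reval k.+1 g) (behead v) i = Some y by apply: H.
  elim=> [|i IHi] y' /=; first exact: IH.
  case E: (prec_loop _ _ _ i) => [h|] //.
  by rewrite (IHi _ E); apply: IH.
- rewrite !reval_mu.
  suff H : forall fu m fu', fu <= fu' -> mu_search (reval k f) v m fu = Some y ->
             mu_search (reval k.+1 f) v m fu' = Some y.
    by apply: H.
  elim=> [//|fu IHf] m [//|fu'] Hle; cbn [mu_search].
  case E: (reval k f (m :: v)) => [[|a]|] //.
  + by rewrite (IH _ _ _ E).
  + by rewrite (IH _ _ _ E); apply: IHf.
Qed.

Lemma reval_monoT k k' c v y : k <= k' -> reval k c v = Some y -> reval k' c v = Some y.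
Proof.
move=> /subnK <-; elim: (k' - k) => [//|d IHd] H.
by rewrite addSn; apply: reval_mono; apply: IHd.
Qed.

Lemma reval_det k k' c v y y' : reval k c v = Some y -> reval k' c v = Some y' -> y = y'.
Proof.
move=> H1 H2.
have := reval_monoT (leq_maxl k k') H1.
by rewrite (reval_monoT (leq_maxr k k') H2) => -[].
Qed.

Definition ev c v y := exists k, reval k c v = Some y.

Definition evall gs v w := exists K, forall k, K <= k ->
  opt_all (map (fun g => reval k g v) gs) = Some w.

Lemma evall_nil v : evall [::] v [::].
Proof. by exists 0. Qed.

Lemma evall_cons g gs v a w : ev g v a -> evall gs v w -> evall (g :: gs) v (a :: w).
Proof.
move=> [k1 H1] [K H]; exists (maxn k1 K) => k Hk /=.
rewrite (reval_monoT _ H1); last by apply: leq_trans Hk; apply: leq_maxl.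
by rewrite H // (leq_trans _ Hk) // leq_maxr.
Qed.

Lemma ev_comp f gs v w y : evall gs v w -> ev f w y -> ev (RComp f gs) v y.
Proof.
move=> [K H] [k1 H1]; exists (maxn K k1).+1.
rewrite reval_comp H ?leq_maxl //.
by apply: reval_monoT H1; apply: leq_maxr.
Qed.

Lemma ev_proj i v : ev (RProj i) v (nth 0 v i).
Proof. by exists 1. Qed.
Lemma ev_zero v : ev RZero v 0.
Proof. by exists 1. Qed.
Lemma ev_succ v : ev RSucc v (nth 0 v 0).+1.
Proof. by exists 1. Qed.

Lemma evall_projs v s n :
  evall [seq RProj i | i <- iota s n] v [seq nth 0 v i | i <- iota s n].
Proof.
elim: n s => [|n IH] s /=; first exact: evall_nil.
by apply: evall_cons; [apply: ev_proj | apply: IH].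
Qed.

Lemma nth_iota_shift (pre l : seq nat) :
  [seq nth 0 (pre ++ l) i | i <- iota (size pre) (size l)] = l.
Proof.
elim: l pre => [//|a l IH] pre /=.
rewrite nth_cat ltnn subnn /=; congr (_ :: _).
have := IH (rcons pre a); rewrite size_rcons -cats1 -catA /= => ->.
done.
Qed.

Lemma evall_env (pre env : seq nat) :
  evall [seq RProj i | i <- iota (size pre) (size env)] (pre ++ env) env.
Proof. by have := evall_projs (pre ++ env) (size pre) (size env); rewrite nth_iota_shift. Qed.

Inductive ex : Type :=
| EZ | ES of ex | EV of nat | EOr of ex | ELet of ex & ex | ERec of ex & ex & ex
| EA1 of ex & ex | EA2 of ex & ex & ex | EA3 of ex & ex & ex & ex.

Fixpoint den (d : nat -> nat) (e : ex) (env : seq nat) {struct e} : nat :=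
  match e with
  | EZ => 0
  | ES e => (den d e env).+1
  | EV i => nth 0 env i
  | EOr e => d (den d e env)
  | ELet e1 e2 => den d e2 (den d e1 env :: env)
  | ERec en ei es =>
      (fix loop (i : nat) : nat := match i with
         | 0 => den d ei env
         | i'.+1 => den d es [:: i', loop i' & env] end) (den d en env)
  | EA1 f a => den d f [:: den d a env]
  | EA2 f a b => den d f [:: den d a env; den d b env]
  | EA3 f a b c => den d f [:: den d a env; den d b env; den d c env]
  end.

Fixpoint hasOr (e : ex) : bool :=
  match e with
  | EZ | EV _ => false
  | ES e => hasOr e
  | EOr _ => true
  | ELet a b => hasOr a || hasOr b
  | ERec a b c => [|| hasOr a, hasOr b | hasOr c]
  | EA1 f a => hasOr f || hasOr a
  | EA2 f a b => [|| hasOr f, hasOr a | hasOr b]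
  | EA3 f a b c => [|| hasOr f, hasOr a, hasOr b | hasOr c]
  end.

Section Compile.
Variable cD : rcode.

Fixpoint compile (m : nat) (e : ex) {struct e} : rcode :=
  match e with
  | EZ => RZero
  | ES e => RComp RSucc [:: compile m e]
  | EV i => RProj i.+1
  | EOr e => RComp cD [:: RProj 0; compile m e]
  | ELet e1 e2 => RComp (compile m.+1 e2)
                    (RProj 0 :: compile m e1 :: [seq RProj i | i <- iota 1 m])
  | ERec en ei es =>
      RComp (RPrec (compile m ei)
                   (RComp (compile m.+2 es)
                      (RProj 2 :: RProj 0 :: RProj 1 :: [seq RProj i | i <- iota 3 m])))
            (compile m en :: RProj 0 :: [seq RProj i | i <- iota 1 m])
  | EA1 f a => RComp (compile 1 f) [:: RProj 0; compile m a]
  | EA2 f a b => RComp (compile 2 f) [:: RProj 0; compile m a; compile m b]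
  | EA3 f a b c => RComp (compile 3 f) [:: RProj 0; compile m a; compile m b; compile m c]
  end.

Definition OK np d := forall z, ev cD [:: np; z] (d z).

Lemma ev_base np g v a : ev g v a -> evall [:: RProj 0; g] (np :: v) [:: np; a] \/ True.
Proof. by right. Qed.

Theorem compile_ok e : forall m np d env, size env = m -> (hasOr e -> OK np d) ->
  ev (compile m e) (np :: env) (den d e env).
Proof.
elim: e => [|e IH|i|e IH|e1 IH1 e2 IH2|en IHn ei IHi es IHs|f IHf a IHa
           |f IHf a IHa b IHb|f IHf a IHa b IHb c IHc] m np d env Hs Hor /=.
- exact: ev_zero.
- apply: (ev_comp (w := [:: den d e env])); last exact: ev_succ.
  by apply: evall_cons; [apply: IH | apply: evall_nil].
- exact: ev_proj.
- apply: (ev_comp (w := [:: np; den d e env])); last exact: Hor.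
  apply: evall_cons; first exact: ev_proj.
  apply: evall_cons; last exact: evall_nil.
  by apply: IH => // H; apply: Hor.
- apply: (ev_comp (w := [:: np, den d e1 env & env])); last first.
    by apply: IH2 => /=; [rewrite Hs | move=> H; apply: Hor => /=; rewrite H orbT].
  apply: evall_cons; first exact: ev_proj.
  apply: evall_cons; first by apply: IH1 => // H; apply: Hor => /=; rewrite H.
  by rewrite -Hs; apply: (evall_env [:: np]).
- set loop := (fix loop (i : nat) : nat := _).
  apply: (ev_comp (w := [:: den d en env, np & env])); last first.
    have Hl : forall i, exists K, forall k, K <= k ->
      prec_loop (reval k (compile m ei))
        (reval k (RComp (compile m.+2 es)
                   (RProj 2 :: RProj 0 :: RProj 1 :: [seq RProj i | i <- iota 3 m])))
        (np :: env) i = Some (loop i).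
      elim=> [|i [K HK]] /=.
        have [K HK] := IHi m np d env Hs (fun H => Hor ltac:(by rewrite /= H orbT)).
        by exists K => k Hk; apply: reval_monoT HK.
      have [K2 HK2] : ev (RComp (compile m.+2 es)
                   (RProj 2 :: RProj 0 :: RProj 1 :: [seq RProj i | i <- iota 3 m]))
                   [:: i, loop i, np & env] (loop i.+1).
        apply: (ev_comp (w := [:: np, i, loop i & env])); last first.
          by apply: IHs => /=; [rewrite Hs | move=> H; apply: Hor => /=; rewrite H !orbT].
        apply: evall_cons; first exact: ev_proj.
        apply: evall_cons; first exact: ev_proj.
        apply: evall_cons; first exact: ev_proj.
        by rewrite -Hs; apply: (evall_env [:: i; loop i; np]).
      exists (maxn K K2) => k Hk.
      rewrite HK; last by apply: leq_trans Hk; apply: leq_maxl.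
      by apply: reval_monoT HK2; apply: leq_trans Hk; apply: leq_maxr.
    have [K HK] := Hl (den d en env).
    by exists K.+1; rewrite reval_prec /=; apply: HK.
  apply: evall_cons; first by apply: IHn => // H; apply: Hor => /=; rewrite H.
  apply: evall_cons; first exact: ev_proj.
  by rewrite -Hs; apply: (evall_env [:: np]).
- apply: (ev_comp (w := [:: np; den d a env])); last first.
    by apply: IHf => // H; apply: Hor => /=; rewrite H.
  apply: evall_cons; first exact: ev_proj.
  apply: evall_cons; last exact: evall_nil.
  by apply: IHa => // H; apply: Hor => /=; rewrite H orbT.
- apply: (ev_comp (w := [:: np; den d a env; den d b env])); last first.
    by apply: IHf => // H; apply: Hor => /=; rewrite H.
  apply: evall_cons; first exact: ev_proj.
  apply: evall_cons; first by apply: IHa => // H; apply: Hor => /=; rewrite H orbT.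
  apply: evall_cons; last exact: evall_nil.
  by apply: IHb => // H; apply: Hor => /=; rewrite H !orbT.
- apply: (ev_comp (w := [:: np; den d a env; den d b env; den d c env])); last first.
    by apply: IHf => // H; apply: Hor => /=; rewrite H.
  apply: evall_cons; first exact: ev_proj.
  apply: evall_cons; first by apply: IHa => // H; apply: Hor => /=; rewrite H orbT.
  apply: evall_cons; first by apply: IHb => // H; apply: Hor => /=; rewrite H !orbT.
  apply: evall_cons; last exact: evall_nil.
  by apply: IHc => // H; apply: Hor => /=; rewrite H !orbT.
Qed.
End Compile.

Section Macros.
Variable d : nat -> nat.
Local Notation den := (den d).

Lemma denZ env : den EZ env = 0. Proof. by []. Qed.
Lemma denS e env : den (ES e) env = (den e env).+1. Proof. by []. Qed.
Lemma denV i env : den (EV i) env = nth 0 env i. Proof. by []. Qed.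
Lemma denOr e env : den (EOr e) env = d (den e env). Proof. by []. Qed.
Lemma denLet e1 e2 env : den (ELet e1 e2) env = den e2 (den e1 env :: env). Proof. by []. Qed.
Lemma denA1 f a env : den (EA1 f a) env = den f [:: den a env]. Proof. by []. Qed.
Lemma denA2 f a b env : den (EA2 f a b) env = den f [:: den a env; den b env]. Proof. by []. Qed.
Lemma denA3 f a b c env : den (EA3 f a b c) env = den f [:: den a env; den b env; den c env].
Proof. by []. Qed.

Lemma denRec_iter en ei es env (F : nat -> nat) :
  (forall i h, den es [:: i, h & env] = F h) ->
  den (ERec en ei es) env = iter (den en env) F (den ei env).
Proof. by move=> H /=; elim: (den en env) => //= n ->; rewrite H. Qed.

Lemma denRec en ei es env (F : nat -> nat -> nat) :
  (forall i h, den es [:: i, h & env] = F i h) ->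
  den (ERec en ei es) env = nat_rec (fun _ => nat) (den ei env) F (den en env).
Proof. by move=> H /=; elim: (den en env) => //= n ->; rewrite H. Qed.
End Macros.

Definition eadd := locked (ERec (EV 0) (EV 1) (ES (EV 1))).
Lemma den_add d a b : den d eadd [:: a; b] = a + b.
Proof. by rewrite /eadd -lock (@denRec_iter d _ _ _ _ succn) //=; elim: a => //= a ->. Qed.
Arguments den : simpl never.

Ltac dsimp := repeat first [rewrite denZ | rewrite denS | rewrite denV | rewrite denOr | rewrite denLet | rewrite denA1 | rewrite denA2 | rewrite denA3]; rewrite /=.

Definition emul := locked (ERec (EV 0) EZ (EA2 eadd (EV 1) (EV 3))).
Lemma den_mul d a b : den d emul [:: a; b] = a * b.
Proof.
rewrite /emul -lock (@denRec_iter d _ _ _ _ (fun h => h + b)); last first.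
  by move=> i h; dsimp; rewrite den_add.
by dsimp; elim: a => //= a ->; rewrite mulSn addnC.
Qed.

Definition epred := locked (ERec (EV 0) EZ (EV 0)).
Lemma den_pred d a : den d epred [:: a] = a.-1.
Proof. by rewrite /epred -lock (@denRec d _ _ _ _ (fun i _ => i)) //; dsimp; case: a. Qed.

Definition esub := locked (ERec (EV 1) (EV 0) (EA1 epred (EV 1))).
Lemma den_sub d a b : den d esub [:: a; b] = a - b.
Proof.
rewrite /esub -lock (@denRec_iter d _ _ _ _ predn); last by move=> i h; dsimp; rewrite den_pred.
by dsimp; elim: b => [|b /= ->]; rewrite ?subn0 ?subnS.
Qed.

Definition eisz := locked (ERec (EV 0) (ES EZ) EZ).
Lemma den_isz d a : den d eisz [:: a] = (a == 0).
Proof. by rewrite /eisz -lock (@denRec d _ _ _ _ (fun _ _ => 0)) //; dsimp; case: a. Qed.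

Definition eleb := locked (EA1 eisz (EA2 esub (EV 0) (EV 1))).
Lemma den_leb d a b : den d eleb [:: a; b] = (a <= b).
Proof. by rewrite /eleb -lock; dsimp; rewrite den_sub den_isz subn_eq0. Qed.

Definition eeqb := locked (EA2 emul (EA2 eleb (EV 0) (EV 1)) (EA2 eleb (EV 1) (EV 0))).
Lemma den_eqb d a b : den d eeqb [:: a; b] = (a == b).
Proof.
rewrite /eeqb -lock; dsimp; rewrite !den_leb den_mul eqn_leq.
by case: (a <= b); case: (b <= a).
Qed.

Definition eite := locked (ERec (EV 0) (EV 2) (EV 3)).
Lemma den_ite d b x y : den d eite [:: b; x; y] = if b is 0 then y else x.
Proof. by rewrite /eite -lock (@denRec d _ _ _ _ (fun _ _ => x)) //; dsimp; case: b. Qed.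

Definition emod2 := locked (ERec (EV 0) EZ (EA1 eisz (EV 1))).
Lemma den_mod2 d a : den d emod2 [:: a] = odd a.
Proof.
rewrite /emod2 -lock (@denRec_iter d _ _ _ _ (fun h => h == 0)); last by move=> i h; dsimp; rewrite den_isz.
by dsimp; elim: a => //= a ->; case: (odd a).
Qed.

Definition ediv2 := locked (ERec (EV 0) EZ (EA2 eadd (EV 1) (EA1 emod2 (EV 0)))).
Lemma den_div2 d a : den d ediv2 [:: a] = a./2.
Proof.
rewrite /ediv2 -lock (@denRec d _ _ _ _ (fun i h => h + odd i)); last first.
  by move=> i h; dsimp; rewrite den_mod2 den_add.
dsimp; elim: a => //= a ->.
by rewrite uphalf_half addnC.
Qed.

Fixpoint ecst k := if k is k'.+1 then ES (ecst k') else EZ.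
Lemma den_cst d k env : den d (ecst k) env = k.
Proof. by elim: k => //= k IH; dsimp; rewrite IH. Qed.
Lemma den_ite0 d x y : den d eite [:: 0; x; y] = y.
Proof. by rewrite den_ite. Qed.
Lemma den_iteS d b x y : den d eite [:: b.+1; x; y] = x.
Proof. by rewrite den_ite. Qed.

Arguments den : simpl never.


Fixpoint tri s := if s is s'.+1 then tri s' + s else 0.
Definition cpair a b := tri (a + b) + b.
Fixpoint cnt z n := if n is n'.+1 then cnt z n' + (tri n <= z) else 0.
Definition csum z := cnt z z.
Definition csnd z := z - tri (csum z).
Definition cfst z := csum z - csnd z.

Lemma tri_mono m n : m <= n -> tri m <= tri n.
Proof.
move=> /subnK <-; elim: (n - m) => [//|k IH].
by rewrite addSn /=; apply: leq_trans IH (leq_addr _ _).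
Qed.
Lemma tri_ge s : s <= tri s.
Proof. elim: s => //= s IH; lia. Qed.

Lemma csum_pair a b : csum (cpair a b) = a + b.
Proof.
rewrite /csum; set z := cpair a b; set s := a + b.
have Ht : forall t, (tri t <= z) = (t <= s).
  move=> t; rewrite /z /cpair -/s; case: (leqP t s) => Hts.
    by rewrite (leq_trans (tri_mono Hts)) // leq_addr.
  apply/negbTE; rewrite -ltnNge; apply: (@leq_trans (tri s.+1)); last exact: tri_mono.
  rewrite /= /s; lia.
have Hc : forall n, cnt z n = minn n s.
  elim=> [|n IH]; first by rewrite min0n.
  have -> : cnt z n.+1 = cnt z n + (tri n.+1 <= z) by [].
  rewrite IH Ht; case: (leqP n.+1 s) => H /=; lia.
rewrite Hc; apply/minn_idPr; rewrite /z /cpair -/s.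
have := tri_ge s; lia.
Qed.

Lemma cpair_snd a b : csnd (cpair a b) = b.
Proof. rewrite /csnd csum_pair /cpair; lia. Qed.
Lemma cpair_fst a b : cfst (cpair a b) = a.
Proof. rewrite /cfst cpair_snd csum_pair; lia. Qed.
Lemma cpair_ge b a : b <= cpair a b.
Proof. rewrite /cpair; lia. Qed.

Definition etri := locked (ERec (EV 0) EZ (EA2 eadd (EV 1) (ES (EV 0)))).
Lemma den_tri d s : den d etri [:: s] = tri s.
Proof.
rewrite /etri -lock (@denRec d _ _ _ _ (fun i h => h + i.+1)); last first.
  by move=> i h; dsimp; rewrite den_add.
by dsimp; elim: s => //= s ->.
Qed.

Definition epair := locked (EA2 eadd (EA1 etri (EA2 eadd (EV 0) (EV 1))) (EV 1)).
Lemma den_pair d a b : den d epair [:: a; b] = cpair a b.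
Proof. by rewrite /epair -lock; dsimp; rewrite !den_add den_tri. Qed.

Definition ecsum := locked (ERec (EV 0) EZ (EA2 eadd (EV 1) (EA2 eleb (EA1 etri (ES (EV 0))) (EV 2)))).
Lemma den_csum d z : den d ecsum [:: z] = csum z.
Proof.
rewrite /ecsum -lock (@denRec d _ _ _ _ (fun i h => h + (tri i.+1 <= z))); last first.
  by move=> i h; dsimp; rewrite den_tri den_leb den_add.
dsimp; rewrite /csum.
have H : forall n, nat_rec (fun _ => nat) 0 (fun i h => h + (tri i.+1 <= z)) n = cnt z n.
  by elim=> //= n ->.
exact: H.
Qed.

Definition esnd := locked (EA2 esub (EV 0) (EA1 etri (EA1 ecsum (EV 0)))).
Lemma den_snd d z : den d esnd [:: z] = csnd z.
Proof. by rewrite /esnd -lock; dsimp; rewrite den_csum den_tri den_sub. Qed.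
Definition efst := locked (EA2 esub (EA1 ecsum (EV 0)) (EA1 esnd (EV 0))).
Lemma den_fst d z : den d efst [:: z] = cfst z.
Proof. by rewrite /efst -lock; dsimp; rewrite den_csum den_snd den_sub. Qed.

Fixpoint lcode (s : seq nat) : nat := if s is a :: s' then (cpair a (lcode s')).+1 else 0.
Definition lhead l := cfst l.-1.
Definition ltail l := csnd l.-1.
Lemma size_lcode s : size s <= lcode s.
Proof. by elim: s => //= a s IH; rewrite ltnS (leq_trans IH) // cpair_ge. Qed.

Definition econs := locked (ES (EA2 epair (EV 0) (EV 1))).
Lemma den_cons d a s : den d econs [:: a; lcode s] = lcode (a :: s).
Proof. by rewrite /econs -lock; dsimp; rewrite den_pair. Qed.
Definition ehd := locked (EA1 efst (EA1 epred (EV 0))).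
Lemma den_hd d l : den d ehd [:: l] = lhead l.
Proof. by rewrite /ehd -lock; dsimp; rewrite den_pred den_fst. Qed.
Definition etl := locked (EA1 esnd (EA1 epred (EV 0))).
Lemma den_tl d l : den d etl [:: l] = ltail l.
Proof. by rewrite /etl -lock; dsimp; rewrite den_pred den_snd. Qed.

(* generic left fold; step has env [x; acc; prm] *)
Definition efoldl (step : ex) := locked (EA1 esnd (ERec (EV 0) (EA2 epair (EV 0) (EV 1))
  (EA3 eite (EA1 efst (EV 1))
     (EA2 epair (EA1 etl (EA1 efst (EV 1)))
                (EA3 step (EA1 ehd (EA1 efst (EV 1))) (EA1 esnd (EV 1)) (EV 4)))
     (EV 1)))).

Lemma den_foldl d step s a prm :
  den d (efoldl step) [:: lcode s; a; prm] =
  foldl (fun acc x => den d step [:: x; acc; prm]) a s.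
Proof.
rewrite /efoldl -lock denA1.
set F := fun st => if cfst st is 0 then st else
  cpair (ltail (cfst st)) (den d step [:: lhead (cfst st); csnd st; prm]).
rewrite (@denRec_iter d _ _ _ _ F); last first.
  by move=> i h; dsimp; rewrite !den_fst !den_snd den_hd den_tl den_pair den_ite.
dsimp; rewrite den_pair.
suff H : forall n s a, size s <= n -> iter n F (cpair (lcode s) a) =
   cpair 0 (foldl (fun acc x => den d step [:: x; acc; prm]) a s).
  by rewrite H ?size_lcode // den_snd cpair_snd.
move=> n {}s; elim: s n => [|x s IH] n a0 Hn.
  have HF : F (cpair 0 a0) = cpair 0 a0 by rewrite /F cpair_fst.
  by elim: n {Hn} => //= n ->.
case: n Hn => [//|n] Hn; rewrite iterSr.
have -> : F (cpair (lcode (x :: s)) a0) = cpair (lcode s) (den d step [:: x; a0; prm]).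
  by rewrite /F cpair_fst /= /ltail /lhead /= cpair_fst cpair_snd cpair_snd.
by rewrite IH.
Qed.
Lemma den_consR d a l : den d econs [:: a; l] = (cpair a l).+1.
Proof. by rewrite /econs -lock; dsimp; rewrite den_pair. Qed.
Lemma eq_foldlX (A B : Type) (f g : B -> A -> B) : f =2 g -> forall z s, foldl f z s = foldl g z s.
Proof. by move=> H z s; elim: s z => //= x s IH z; rewrite H IH. Qed.

Arguments den : simpl never.


Definition erevapp := locked (EA3 (efoldl (EA2 econs (EV 0) (EV 1))) (EV 0) (EV 1) EZ).
Lemma den_revapp d s t : den d erevapp [:: lcode s; lcode t] = lcode (catrev s t).
Proof.
rewrite /erevapp -lock; dsimp; rewrite den_foldl.
elim: s t => //= x s IH t; dsimp; by rewrite den_cons IH.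
Qed.

Definition erev := locked (EA2 erevapp (EV 0) EZ).
Lemma den_rev d s : den d erev [:: lcode s] = lcode (rev s).
Proof. by rewrite /erev -lock; dsimp; rewrite (den_revapp d s [::]). Qed.

Definition eapp := locked (EA2 erevapp (EA1 erev (EV 0)) (EV 1)).
Lemma den_app d s t : den d eapp [:: lcode s; lcode t] = lcode (s ++ t).
Proof. by rewrite /eapp -lock; dsimp; rewrite den_rev den_revapp catrevE revK. Qed.

(* filter: p has env [x; prm] *)
Definition efilter p := locked (EA1 erev (EA3 (efoldl
   (EA3 eite (EA2 p (EV 0) (EV 2)) (EA2 econs (EV 0) (EV 1)) (EV 1))) (EV 0) EZ (EV 1))).
Lemma den_filter d p (P : pred nat) s prm :
  (forall x, x \in s -> den d p [:: x; prm] = P x) ->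
  den d (efilter p) [:: lcode s; prm] = lcode (filter P s).
Proof.
move=> HP; rewrite /efilter -lock; dsimp; rewrite den_foldl.
suff H : forall t, foldl (fun acc x => den d (EA3 eite (EA2 p (EV 0) (EV 2)) (EA2 econs (EV 0) (EV 1)) (EV 1)) [:: x; acc; prm]) (lcode t) s = lcode (catrev (filter P s) t).
  by rewrite (H [::]) den_rev catrevE cats0 revK.
elim: s HP => //= x s IH HP t; dsimp.
rewrite HP ?mem_head //; case: (P x); rewrite ?den_iteS ?den_ite0 ?den_cons IH //;
  by move=> y Hy; apply: HP; rewrite in_cons Hy orbT.
Qed.

Definition emap f := locked (EA1 erev (EA3 (efoldl
   (EA2 econs (EA2 f (EV 0) (EV 2)) (EV 1))) (EV 0) EZ (EV 1))).
Lemma den_map d f (g : nat -> nat) s prm :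
  (forall x, x \in s -> den d f [:: x; prm] = g x) ->
  den d (emap f) [:: lcode s; prm] = lcode (map g s).
Proof.
move=> Hg; rewrite /emap -lock; dsimp; rewrite den_foldl.
suff H : forall t, foldl (fun acc x => den d (EA2 econs (EA2 f (EV 0) (EV 2)) (EV 1)) [:: x; acc; prm]) (lcode t) s = lcode (catrev (map g s) t).
  by rewrite (H [::]) den_rev catrevE cats0 revK.
elim: s Hg => //= x s IH Hg t; dsimp.
rewrite Hg ?mem_head // den_cons IH //.
by move=> y Hy; apply: Hg; rewrite in_cons Hy orbT.
Qed.

Arguments den : simpl never.


Definition bstep (acc : nat) (b : bool) := acc.*2 + b.
Definition wv (s : seq bool) := foldl bstep 0 s.
Lemma foldl_bstep m s : foldl bstep m s = m * 2 ^ size s + wv s.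
Proof.
rewrite /wv; elim: s m => [|a s IH] m; first by rewrite /= muln1 addn0.
have -> : foldl bstep m (a :: s) = foldl bstep (bstep m a) s by [].
have -> : foldl bstep 0 (a :: s) = foldl bstep (bstep 0 a) s by [].
rewrite IH [foldl bstep (bstep 0 a) s]IH /bstep /= expnS; case: a => /=; lia.
Qed.
Lemma wv_lt s : wv s < 2 ^ size s.
Proof.
elim: s => //= a s IH; rewrite /wv /= foldl_bstep -/(wv s) /bstep expnS.
case: a => /=; lia.
Qed.
Lemma wv_cons a s : wv (a :: s) = a * 2 ^ size s + wv s.
Proof. by rewrite /wv /= foldl_bstep /bstep; case: a. Qed.

Lemma nat_of_strE s : nat_of_str s = 2 ^ size s + wv s - 1.
Proof. by rewrite /nat_of_str -/(bstep) -/(foldl bstep 1 s) foldl_bstep mul1n subn1. Qed.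

Lemma nat_of_str_bounds s : 2 ^ size s <= (nat_of_str s).+1 < 2 ^ (size s).+1.
Proof.
rewrite nat_of_strE expnS; have := wv_lt s; have := expn_gt0 2 (size s); lia.
Qed.

Definition app_bit (N b : nat) := N.*2.+1 + b.
Lemma nat_of_str_rcons s b : nat_of_str (rcons s b) = app_bit (nat_of_str s) b.
Proof.
rewrite /app_bit !nat_of_strE size_rcons /wv -cats1 foldl_cat /= -/(wv s) expnS /bstep.
have := expn_gt0 2 (size s); lia.
Qed.
Lemma nat_of_str_cat s t :
  nat_of_str (s ++ t) = foldl app_bit (nat_of_str s) (map nat_of_bool t).
Proof.
elim/last_ind: t => [|t b IH]; first by rewrite cats0.
by rewrite -rcons_cat nat_of_str_rcons IH map_rcons -cats1 foldl_cat.
Qed.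
Lemma nat_of_str_nil : nat_of_str [::] = 0. Proof. by []. Qed.

Lemma shortlex_nat s t : shortlex s t = (nat_of_str s <= nat_of_str t).
Proof.
rewrite /shortlex.
have Hs := nat_of_str_bounds s; have Ht := nat_of_str_bounds t.
case: (ltngtP (size s) (size t)) => H /=.
- apply/esym/idP; have : 2 ^ (size s).+1 <= 2 ^ size t by rewrite leq_exp2l.
  lia.
- apply/esym/negbTE; rewrite -ltnNge.
  have : 2 ^ (size t).+1 <= 2 ^ size s by rewrite leq_exp2l.
  lia.
- rewrite !nat_of_strE H leq_sub2rE ?leq_add2l; last first.
    by rewrite (leq_trans _ (leq_addr _ _)) // expn_gt0.
  elim: s t H {Hs Ht} => [|a s IH] [|b t] //= [H].
  rewrite !wv_cons IH // H.
  have := wv_lt s; have := wv_lt t; rewrite H.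
  case: a; case: b => /=; lia.
Qed.

Fixpoint bitsit (k M : nat) (acc : seq bool) :=
  if k is k'.+1 then (if M <= 1 then acc else bitsit k' M./2 (odd M :: acc)) else acc.
Definition str_of_nat N := bitsit N.+1 N.+1 [::].

Lemma vE s : (nat_of_str s).+1 = foldl bstep 1 s.
Proof. rewrite foldl_bstep mul1n nat_of_strE; have := expn_gt0 2 (size s); lia. Qed.

Lemma bitsit_ok s acc k : size s <= k -> bitsit k (nat_of_str s).+1 acc = s ++ acc.
Proof.
elim: k s acc => [|k IH] s acc.
  by rewrite leqn0 => /nilP ->.
case/lastP: s => [|s b] Hs; first by [].
rewrite nat_of_str_rcons /app_bit.
set M := ((nat_of_str s).*2.+1 + b).+1.
have -> : bitsit k.+1 M acc = if M <= 1 then acc else bitsit k M./2 (odd M :: acc) by [].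
rewrite /M; clear M.
have -> : ((nat_of_str s).*2.+1 + b).+1 <= 1 = false by lia.
have -> : (((nat_of_str s).*2.+1 + b).+1)./2 = (nat_of_str s).+1.
  by clear Hs; case: b; rewrite /= ?addn0 ?addn1 -?addnn; lia.
have -> : odd ((nat_of_str s).*2.+1 + b).+1 = b.
  by clear Hs; case: b; rewrite /= ?addn0 ?addn1 ?odd_double //= odd_double.
by rewrite IH ?cat_rcons //; move: Hs; rewrite size_rcons.
Qed.

Lemma size_le_nat s : size s <= (nat_of_str s).+1.
Proof.
have := nat_of_str_bounds s => /andP [H _].
by apply: leq_trans H; apply: ltnW; apply: ltn_expl.
Qed.

Lemma nat_of_strK : cancel nat_of_str str_of_nat.
Proof. by move=> s; rewrite /str_of_nat bitsit_ok ?cats0 // size_le_nat. Qed.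
Lemma nat_of_str_inj : injective nat_of_str.
Proof. exact: can_inj nat_of_strK. Qed.

Lemma nat_of_str_surj N : exists s, nat_of_str s = N.
Proof.
elim: N {-2}N (leqnn N) => [|k IH] N HN.
  by exists [::]; move: HN; rewrite leqn0 => /eqP ->.
case: N HN => [|N] HN; first by exists [::].
(* N.+1 + 1 = 2 M + b with M >= 1 *)
have Hh : N./2 <= k by apply: (@leq_trans N) => //; rewrite leq_half_double; lia.
have [s Hs] := IH (N./2) Hh.
exists (rcons s (odd N)); rewrite nat_of_str_rcons Hs /app_bit.
have := odd_double_half N; case: (odd N); rewrite /=; lia.
Qed.

Lemma str_of_natK : cancel str_of_nat nat_of_str.
Proof. by move=> N; have [s <-] := nat_of_str_surj N; rewrite nat_of_strK. Qed.

Arguments den : simpl never.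


Definition ebits := locked (EA1 esnd (ERec (ES (EV 0)) (EA2 epair (ES (EV 0)) EZ)
  (EA3 eite (EA2 eleb (EA1 efst (EV 1)) (ecst 1)) (EV 1)
     (EA2 epair (EA1 ediv2 (EA1 efst (EV 1)))
                (EA2 econs (EA1 emod2 (EA1 efst (EV 1))) (EA1 esnd (EV 1))))))).

Lemma den_bits d s : den d ebits [:: nat_of_str s] = lcode (map nat_of_bool s).
Proof.
rewrite /ebits -lock denA1.
set F := fun st => if cfst st <= 1 then st else
   cpair (cfst st)./2 (cpair (odd (cfst st)) (csnd st)).+1.
rewrite (@denRec_iter d _ _ _ _ F); last first.
  move=> i h; dsimp; rewrite den_fst ?den_cst den_leb /F.
  by case: (cfst h <= 1); rewrite ?den_iteS ?den_ite0 // den_snd den_mod2 den_consR den_div2 den_pair.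
dsimp; rewrite den_pair.
suff H : forall k s acc, size s <= k ->
    iter k F (cpair (nat_of_str s).+1 (lcode acc)) = cpair 1 (lcode (map nat_of_bool s ++ acc)).
  rewrite (H _ s [::]) ?cats0 /F ?cpair_fst /= ?den_snd ?cpair_snd //.
  have := nat_of_str_bounds s => /andP [Hb _].
  by rewrite -ltnS (leq_trans _ Hb) // ltn_expl.
elim=> [|k IH] {}s acc.
  by rewrite leqn0 => /nilP ->.
case/lastP: s => [|s b] Hs.
  have HF : F (cpair 1 (lcode acc)) = cpair 1 (lcode acc) by rewrite /F cpair_fst.
  by elim: k.+1 {IH Hs} => //= k' ->; rewrite HF.
rewrite iterSr nat_of_str_rcons /app_bit.
have -> : F (cpair ((nat_of_str s).*2.+1 + b).+1 (lcode acc)) =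
          cpair (nat_of_str s).+1 (lcode (nat_of_bool b :: acc)).
  rewrite /F cpair_fst cpair_snd.
  have -> : ((nat_of_str s).*2.+1 + b).+1 <= 1 = false by lia.
  have -> : (((nat_of_str s).*2.+1 + b).+1)./2 = (nat_of_str s).+1.
    by case: b {Hs}; rewrite /= ?addn0 ?addn1 -?addnn; lia.
  have -> : odd ((nat_of_str s).*2.+1 + b).+1 = b.
    by case: b {Hs}; rewrite /= ?addn0 ?addn1 ?odd_double //= odd_double.
  done.
by rewrite IH ?map_rcons ?cat_rcons //; move: Hs; rewrite size_rcons.
Qed.

Lemma den_bitsN d N : exists s, N = nat_of_str s /\ den d ebits [:: N] = lcode (map nat_of_bool s).
Proof. by have [s <-] := nat_of_str_surj N; exists s; split => //; rewrite den_bits. Qed.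

Definition eappbit := locked (ES (EA2 eadd (EA2 eadd (EV 0) (EV 0)) (EV 1))).
Lemma den_appbit d N b : den d eappbit [:: N; b] = app_bit N b.
Proof. by rewrite /eappbit -lock; dsimp; rewrite !den_add /app_bit addnn. Qed.

Definition ebits2N := locked (EA3 (efoldl (EA2 eappbit (EV 1) (EV 0))) (EV 0) EZ EZ).
Lemma den_bits2N d s : den d ebits2N [:: lcode (map nat_of_bool s)] = nat_of_str s.
Proof.
rewrite /ebits2N -lock; dsimp; rewrite den_foldl.
rewrite -[s]cat0s nat_of_str_cat nat_of_str_nil /=.
by apply: eq_foldlX => a b; dsimp; rewrite den_appbit.
Qed.

Definition eblock := locked (EA2 eappbit (EA2 eappbit
   (EA3 (efoldl (EA2 eappbit (EA2 eappbit (EV 1) (EV 0)) (EV 0))) (EA1 ebits (EV 1)) (EV 0) EZ)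
   EZ) (ecst 1)).
Lemma den_block d t s : den d eblock [:: nat_of_str t; nat_of_str s] = nat_of_str (t ++ enc_str s).
Proof.
rewrite /eblock -lock; dsimp; rewrite den_bits den_foldl ?den_cst.
rewrite /enc_str catA nat_of_str_cat /= !den_appbit.
congr (app_bit (app_bit _ 0) 1).
rewrite nat_of_str_cat.
rewrite (eq_foldlX (g := fun a b => app_bit (app_bit a b) b)); last first.
  by move=> a b; dsimp; rewrite !den_appbit.
by elim: s (nat_of_str t) => //= b s IH a.
Qed.

Definition eencN := locked (EA3 (efoldl (EA2 eblock (EV 1) (EV 0))) (EV 0) EZ EZ).
Lemma den_encN d l : den d eencN [:: lcode (map nat_of_str l)] = nat_of_str (enc_list l).
Proof.
rewrite /eencN -lock; dsimp; rewrite den_foldl.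
rewrite -(cat0s (enc_list l)) -nat_of_str_nil.
rewrite (eq_foldlX (g := fun a x => den d eblock [:: a; x])); last first.
  by move=> a x; dsimp.
suff H : forall t, foldl (fun a x => den d eblock [:: a; x]) (nat_of_str t) (map nat_of_str l)
  = nat_of_str (t ++ enc_list l) by apply: H.
elim: l => [|s l IH] t /=; first by rewrite /enc_list /= cats0.
by rewrite den_block IH /enc_list /= catA.
Qed.

Definition dstate := (nat * seq bool * seq (seq bool))%type.
Definition dstr_step (st : dstate) (b : bool) : dstate :=
  let: (ph, cur, acc) := st in
  if ph == 0 then ((nat_of_bool b).+1, cur, acc)
  else if ph.-1 == b then (0, rcons cur b, acc) else (0, [::], cur :: acc).
Definition dec_str (w : seq bool) : seq (seq bool) :=
  rev (foldl dstr_step (0, [::], [::]) w).2.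

Lemma dec_enc l : dec_str (enc_list l) = l.
Proof.
have Hb : forall s cur acc, foldl dstr_step (0, cur, acc) (flatten [seq [:: b; b] | b <- s])
   = (0, cur ++ s, acc).
  elim=> [|b s IH] cur acc /=; first by rewrite cats0.
  by rewrite eqxx IH cat_rcons.
have Hs : forall s acc, foldl dstr_step (0, [::], acc) (enc_str s) = (0, [::], s :: acc).
  by move=> s acc; rewrite /enc_str foldl_cat Hb.
have Hl : forall acc, foldl dstr_step (0, [::], acc) (enc_list l) = (0, [::], catrev l acc).
  elim: l => //= s l IH acc.
  by rewrite /enc_list /= foldl_cat Hs -/(enc_list l) IH.
by rewrite /dec_str Hl /= catrevE cats0 revK.
Qed.

Definition code_state (st : dstate) : nat :=
  let: (ph, cur, acc) := st in cpair ph (cpair (nat_of_str cur) (lcode (map nat_of_str acc))).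

Definition edstep := locked (EA3 eite (EA1 efst (EV 1))
   (EA3 eite (EA2 eeqb (EA1 epred (EA1 efst (EV 1))) (EV 0))
        (EA2 epair EZ (EA2 epair (EA2 eappbit (EA1 efst (EA1 esnd (EV 1))) (EV 0))
                                 (EA1 esnd (EA1 esnd (EV 1)))))
        (EA2 epair EZ (EA2 epair EZ (EA2 econs (EA1 efst (EA1 esnd (EV 1)))
                                               (EA1 esnd (EA1 esnd (EV 1)))))))
   (EA2 epair (ES (EV 0)) (EA1 esnd (EV 1)))).

Lemma den_dstep d st (b : bool) prm :
  den d edstep [:: nat_of_bool b; code_state st; prm] = code_state (dstr_step st b).
Proof.
case: st => [[ph cur] acc]; rewrite /edstep -lock; dsimp.
rewrite !den_fst !den_snd !cpair_fst !cpair_snd.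
case: ph => [|ph].
  by rewrite den_ite0 den_pair.
rewrite den_iteS den_pred den_eqb /=.
case: eqP => [Hpb|Hpb].
  rewrite den_iteS !den_pair ?den_fst ?den_snd ?cpair_fst ?cpair_snd den_appbit.
  by rewrite -nat_of_str_rcons.
rewrite den_ite0 !den_pair ?den_fst ?den_snd ?cpair_fst ?cpair_snd den_consR.
done.
Qed.

Definition edec := locked (EA1 erev (EA1 esnd (EA1 esnd
  (EA3 (efoldl edstep) (EA1 ebits (EV 0)) (EA2 epair EZ (EA2 epair EZ EZ)) EZ)))).

Lemma den_dec d w : den d edec [:: nat_of_str w] = lcode (map nat_of_str (dec_str w)).
Proof.
rewrite /edec -lock; dsimp; rewrite den_bits !den_pair den_foldl.
have -> : cpair 0 (cpair 0 0) = code_state (0, [::], [::]) by [].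
have H : forall st, foldl (fun acc x => den d edstep [:: x; acc; 0]) (code_state st) (map nat_of_bool w)
           = code_state (foldl dstr_step st w).
  elim: w => //= b w IH st; by rewrite den_dstep IH.
rewrite H /dec_str; case: (foldl _ _ _) => [[ph cur] acc] /=.
by rewrite !den_snd !cpair_snd den_rev map_rev.
Qed.

Arguments den : simpl never.


Definition ins (x : nat) (acc : seq nat) :=
  filter (fun y => y < x) acc ++ x :: filter (fun y => x < y) acc.
Definition sortd (L : seq nat) := foldl (fun acc x => ins x acc) [::] L.

Lemma ins_pw x acc : pairwise ltn acc -> pairwise ltn (ins x acc).
Proof.
move=> H.
have H1 : allrel ltn [seq y <- acc | y < x] (x :: [seq y <- acc | x < y]).
  apply/allrelP => y z; rewrite mem_filter => /andP [Hy _].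
  rewrite in_cons mem_filter => /orP [/eqP -> //|/andP [Hz _]].
  exact: ltn_trans Hy Hz.
have H2 : all (ltn x) [seq y <- acc | x < y].
  by apply/allP => y; rewrite mem_filter => /andP [].
by rewrite /ins pairwise_cat H1 pairwise_cons H2 !pairwise_filter.
Qed.
Lemma ins_mem x acc y : (y \in ins x acc) = (y == x) || (y \in acc).
Proof.
rewrite /ins mem_cat in_cons !mem_filter.
case: (ltngtP y x) => [H|H|->]; rewrite ?eqxx ?orbT //=.
all: by rewrite ?orbF ?andbT ?andbF.
Qed.
Lemma sortd_pw L : pairwise ltn (sortd L).
Proof.
rewrite /sortd; have : pairwise ltn [::] by [].
elim: L [::] => //= x L IH acc Hacc; apply: IH; exact: ins_pw.
Qed.
Lemma sortd_mem L y : (y \in sortd L) = (y \in L).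
Proof.
suff H : forall acc, (y \in foldl (fun acc x => ins x acc) acc L) = (y \in acc) || (y \in L).
  by rewrite /sortd H.
elim: L => //= [|x L IH] acc; first by rewrite orbF.
rewrite IH ins_mem in_cons.
by case: (y == x); case: (y \in acc); case: (y \in L).
Qed.

Definition eltp := locked (EA2 eleb (ES (EV 0)) (EV 1)).
Definition egtp := locked (EA2 eleb (ES (EV 1)) (EV 0)).
Definition eins := locked (EA2 eapp (EA2 (efilter eltp) (EV 1) (EV 0))
                                (EA2 econs (EV 0) (EA2 (efilter egtp) (EV 1) (EV 0)))).
Lemma den_ins d x acc : den d eins [:: x; lcode acc] = lcode (ins x acc).
Proof.
rewrite /eins -lock; dsimp.
rewrite (@den_filter _ _ (fun y => y < x)); last by move=> y _; rewrite /eltp -lock; dsimp; rewrite den_leb.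
rewrite (@den_filter _ _ (fun y => x < y)); last by move=> y _; rewrite /egtp -lock; dsimp; rewrite den_leb.
by rewrite den_cons den_app.
Qed.

Definition esortd := locked (EA3 (efoldl (EA2 eins (EV 0) (EV 1))) (EV 0) EZ EZ).
Lemma den_sortd d L : den d esortd [:: lcode L] = lcode (sortd L).
Proof.
rewrite /esortd -lock; dsimp; rewrite den_foldl /sortd.
suff H : forall acc, foldl (fun a x => den d (EA2 eins (EV 0) (EV 1)) [:: x; a; 0]) (lcode acc) L
   = lcode (foldl (fun acc x => ins x acc) acc L) by apply: (H [::]).
elim: L => //= x L IH acc.
by rewrite -IH; dsimp; rewrite den_ins.
Qed.

Arguments den : simpl never.


Definition eDeq := EA2 eeqb (EOr (EV 0)) (EV 1).
Definition eG := locked (EA1 eencN (EA1 esortd (EA2 (efilter eDeq) (EA1 edec (EV 0)) (EV 0)))).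

Definition Gs (d : nat -> nat) (w : seq bool) : seq bool :=
  enc_list (map str_of_nat (sortd (filter (fun z => d z == nat_of_str w) (map nat_of_str (dec_str w))))).

Lemma den_G d w : den d eG [:: nat_of_str w] = nat_of_str (Gs d w).
Proof.
rewrite /eG -lock; dsimp; rewrite den_dec.
rewrite (@den_filter _ _ (fun z => d z == nat_of_str w)); last first.
  by move=> z _; rewrite /eDeq; dsimp; rewrite den_eqb.
rewrite den_sortd -(den_encN d) -map_comp.
by rewrite (eq_map (f := nat_of_str \o str_of_nat) (g := id)) ?map_id // => z /=; rewrite str_of_natK.
Qed.

Definition eGx := locked (EA1 eG (EOr (EV 0))).
Lemma den_Gx d x : den d eGx [:: x] = nat_of_str (Gs d (str_of_nat (d x))).
Proof. by rewrite /eGx -lock; dsimp; rewrite -den_G str_of_natK. Qed.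

Definition eback := EOr (EA1 ehd (EA1 edec (EV 0))).
Lemma den_back d w : den d eback [:: nat_of_str w] = d (lhead (lcode (map nat_of_str (dec_str w)))).
Proof. by rewrite /eback; dsimp; rewrite den_dec den_hd. Qed.

Lemma lhead_cons a s : lhead (lcode (a :: s)) = a.
Proof. by rewrite /lhead /= cpair_fst. Qed.

(* range of numbers of strings of length n *)
Definition epow2 := locked (ERec (EV 0) (ES EZ) (EA2 eadd (EV 1) (EV 1))).
Lemma den_pow2 d n : den d epow2 [:: n] = 2 ^ n.
Proof.
rewrite /epow2 -lock (@denRec_iter d _ _ _ _ (fun h => h + h)); last by move=> i h; dsimp; rewrite den_add.
by dsimp; elim: n => //= n ->; rewrite expnS; lia.
Qed.

Fixpoint rngl (b k : nat) : seq nat := if k is k'.+1 then (b + k') :: rngl b k' else [::].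
Lemma mem_rngl b k z : (z \in rngl b k) = (b <= z < b + k).
Proof.
elim: k => [|k IH] /=; first by rewrite in_nil addn0; case: leqP => //= H; lia.
rewrite in_cons IH; apply/idP/idP.
  case/orP => [/eqP ->|/andP [H1 H2]]; apply/andP; split; lia.
move=> /andP [H1 H2]; case: (ltngtP z (b + k)) => H; [apply/orP; right; apply/andP; split; lia | lia |].
by apply/orP; left; apply/eqP.
Qed.

Definition erng := locked (ERec (EA1 epow2 (EV 0)) EZ
   (EA2 econs (EA2 eadd (EA1 epred (EA1 epow2 (EV 2))) (EV 0)) (EV 1))).
Lemma den_rng d n : den d erng [:: n] = lcode (rngl (2 ^ n).-1 (2 ^ n)).
Proof.
rewrite /erng -lock (@denRec d _ _ _ _ (fun i h => (cpair ((2 ^ n).-1 + i) h).+1)); last first.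
  by move=> i h; dsimp; rewrite den_pow2 den_pred den_add den_consR.
dsimp; rewrite den_pow2.
set b := (2 ^ n).-1; by elim: (2 ^ n) => //= k ->.
Qed.

Definition eFmain := EA1 eencN (EA1 esortd (EA2 (emap (EA1 eGx (EV 0))) (EA1 erng (EV 0)) EZ)).
Definition Fs (d : nat -> nat) (n : nat) : seq bool :=
  enc_list (map str_of_nat (sortd (map (fun z => nat_of_str (Gs d (str_of_nat (d z))))
                                       (rngl (2 ^ n).-1 (2 ^ n))))).
Lemma den_Fmain d n : den d eFmain [:: n] = nat_of_str (Fs d n).
Proof.
rewrite /eFmain; dsimp; rewrite den_rng.
rewrite (@den_map _ _ (fun z => nat_of_str (Gs d (str_of_nat (d z))))); last first.
  by move=> z _; dsimp; rewrite den_Gx.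
rewrite den_sortd /Fs -(den_encN d) -map_comp.
by rewrite (eq_map (f := nat_of_str \o str_of_nat) (g := id)) ?map_id // => z /=; rewrite str_of_natK.
Qed.

Arguments den : simpl never.


Definition pstate := (nat * seq bool * seq bool)%type.
Definition pstep (st : pstate) (b : bool) : pstate :=
  let: (m, s1, s2) := st in
  if m == 3 then (3, s1, rcons s2 b)
  else if m == 0 then ((nat_of_bool b).+1, s1, s2)
  else if m.-1 == b then (0, rcons s1 b, s2) else (3, s1, s2).

Lemma pstep_enc s p : foldl pstep (0, [::], [::]) (enc_str s ++ p) = (3, s, p).
Proof.
have Hb : forall s s1, foldl pstep (0, s1, [::]) (flatten [seq [:: b; b] | b <- s])
   = (0, s1 ++ s, [::]).
  elim=> [|b s' IH] s1 /=; first by rewrite cats0.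
  by case: b => /=; rewrite IH cat_rcons.
have Hp : forall p s2, foldl pstep (3, s, s2) p = (3, s, s2 ++ p).
  elim=> [|b p' IH] s2 /=; first by rewrite cats0.
  by rewrite IH cat_rcons.
by rewrite /enc_str -catA foldl_cat Hb /= Hp.
Qed.

Definition pcode (st : pstate) : nat :=
  let: (m, s1, s2) := st in cpair m (cpair (nat_of_str s1) (nat_of_str s2)).

Definition epstep := locked (EA3 eite (EA2 eeqb (EA1 efst (EV 1)) (ecst 3))
   (EA2 epair (ecst 3) (EA2 epair (EA1 efst (EA1 esnd (EV 1)))
                                  (EA2 eappbit (EA1 esnd (EA1 esnd (EV 1))) (EV 0))))
   (EA3 eite (EA1 efst (EV 1))
      (EA3 eite (EA2 eeqb (EA1 epred (EA1 efst (EV 1))) (EV 0))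
          (EA2 epair EZ (EA2 epair (EA2 eappbit (EA1 efst (EA1 esnd (EV 1))) (EV 0))
                                   (EA1 esnd (EA1 esnd (EV 1)))))
          (EA2 epair (ecst 3) (EA1 esnd (EV 1))))
      (EA2 epair (ES (EV 0)) (EA1 esnd (EV 1))))).

Lemma den_pstep d st (b : bool) prm :
  den d epstep [:: nat_of_bool b; pcode st; prm] = pcode (pstep st b).
Proof.
case: st => [[m s1] s2]; rewrite /epstep -lock; dsimp.
rewrite !den_fst !den_snd ?den_cst !(den_eqb, den_pred, den_pair, den_appbit, cpair_fst, cpair_snd).
case: (m =P 3) => [->|Hm].
  by rewrite !den_ite /= nat_of_str_rcons.
case: m Hm => [|m] Hm.
  by rewrite !den_ite /=.
rewrite !den_ite /=.
case: eqP => [Hpb|Hpb] //=.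
by rewrite nat_of_str_rcons.
Qed.

Definition eparse := locked (EA3 (efoldl epstep) (EA1 ebits (EV 0)) (EA2 epair EZ (EA2 epair EZ EZ)) EZ).
Lemma den_parse d s p : den d eparse [:: nat_of_str (enc_str s ++ p)] = pcode (3, s, p).
Proof.
rewrite /eparse -lock; dsimp; rewrite den_bits !den_pair den_foldl.
have -> : cpair 0 (cpair 0 0) = pcode (0, [::], [::]) by [].
have H : forall st w, foldl (fun acc x => den d epstep [:: x; acc; 0]) (pcode st) (map nat_of_bool w)
           = pcode (foldl pstep st w).
  move=> st w; elim: w st => //= b w IH st; by rewrite den_pstep IH.
by rewrite H pstep_enc.
Qed.

Definition eN := EA1 efst (EA1 esnd (EA1 eparse (EV 0))).
Definition eP := EA1 esnd (EA1 esnd (EA1 eparse (EV 0))).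
Lemma den_N d s p : den d eN [:: nat_of_str (enc_str s ++ p)] = nat_of_str s.
Proof. by rewrite /eN; dsimp; rewrite den_parse den_snd cpair_snd den_fst cpair_fst. Qed.
Lemma den_P d s p : den d eP [:: nat_of_str (enc_str s ++ p)] = nat_of_str p.
Proof. by rewrite /eP; dsimp; rewrite den_parse !den_snd !cpair_snd. Qed.

Lemma hasOr_cst k : hasOr (ecst k) = false. Proof. by elim: k. Qed.
Ltac hor X := rewrite /X -lock /= ?hasOr_cst.
Lemma hO_add : hasOr eadd = false. Proof. by hor eadd. Qed.
Lemma hO_mul : hasOr emul = false. Proof. by hor emul; rewrite hO_add. Qed.
Lemma hO_pred : hasOr epred = false. Proof. by hor epred. Qed.
Lemma hO_sub : hasOr esub = false. Proof. by hor esub; rewrite hO_pred. Qed.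
Lemma hO_isz : hasOr eisz = false. Proof. by hor eisz. Qed.
Lemma hO_leb : hasOr eleb = false. Proof. by hor eleb; rewrite hO_isz hO_sub. Qed.
Lemma hO_eqb : hasOr eeqb = false. Proof. by hor eeqb; rewrite hO_mul hO_leb. Qed.
Lemma hO_ite : hasOr eite = false. Proof. by hor eite. Qed.
Lemma hO_mod2 : hasOr emod2 = false. Proof. by hor emod2; rewrite hO_isz. Qed.
Lemma hO_div2 : hasOr ediv2 = false. Proof. by hor ediv2; rewrite hO_add hO_mod2. Qed.
Lemma hO_tri : hasOr etri = false. Proof. by hor etri; rewrite hO_add. Qed.
Lemma hO_pair : hasOr epair = false. Proof. by hor epair; rewrite hO_add hO_tri. Qed.
Lemma hO_csum : hasOr ecsum = false. Proof. by hor ecsum; rewrite hO_add hO_leb hO_tri. Qed.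
Lemma hO_snd : hasOr esnd = false. Proof. by hor esnd; rewrite hO_sub hO_tri hO_csum. Qed.
Lemma hO_fst : hasOr efst = false. Proof. by hor efst; rewrite hO_sub hO_snd hO_csum. Qed.
Lemma hO_cons : hasOr econs = false. Proof. by hor econs; rewrite hO_pair. Qed.
Lemma hO_hd : hasOr ehd = false. Proof. by hor ehd; rewrite hO_fst hO_pred. Qed.
Lemma hO_tl : hasOr etl = false. Proof. by hor etl; rewrite hO_snd hO_pred. Qed.
Lemma hO_foldl s : hasOr (efoldl s) = hasOr s.
Proof. by hor efoldl; rewrite hO_snd hO_pair hO_ite hO_fst hO_tl hO_hd /= !orbF. Qed.
Lemma hO_bits : hasOr ebits = false.
Proof. by hor ebits; rewrite hO_snd hO_pair hO_ite hO_leb hO_fst hO_div2 hO_cons hO_mod2. Qed.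
Lemma hO_appbit : hasOr eappbit = false. Proof. by hor eappbit; rewrite hO_add. Qed.
Lemma hO_pstep : hasOr epstep = false.
Proof. by hor epstep; rewrite hO_ite hO_eqb hO_fst hO_pair hO_snd hO_appbit hO_pred. Qed.
Lemma hO_parse : hasOr eparse = false.
Proof. by hor eparse; rewrite hO_foldl hO_pstep hO_bits hO_pair. Qed.
Lemma hO_N : hasOr eN = false. Proof. by rewrite /eN /= hO_fst hO_snd hO_parse. Qed.
Lemma hO_P : hasOr eP = false. Proof. by rewrite /eP /= hO_snd hO_parse. Qed.

Lemma shortlex_trans : transitive shortlex.
Proof. by move=> b a c; rewrite !shortlex_nat; apply: leq_trans. Qed.
Lemma shortlex_anti : antisymmetric shortlex.
Proof.
move=> a b; rewrite !shortlex_nat => H; apply: nat_of_str_inj; apply/eqP.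
by rewrite eqn_leq.
Qed.
Lemma shortlex_total : total shortlex.
Proof. by move=> a b; rewrite !shortlex_nat leq_total. Qed.

Lemma str_of_nat_inj : injective str_of_nat.
Proof. exact: can_inj str_of_natK. Qed.

Lemma sortd_sort (L : seq nat) (S : seq (seq bool)) :
  uniq S -> (forall s, (s \in S) = (nat_of_str s \in L)) ->
  map str_of_nat (sortd L) = sort shortlex S.
Proof.
move=> US HS.
have Hpw := sortd_pw L.
apply: (sorted_eq shortlex_trans shortlex_anti); last first.
- apply: uniq_perm.
  + rewrite map_inj_uniq; last exact: str_of_nat_inj.
    by apply: (sorted_uniq ltn_trans ltnn); apply: pairwise_sorted.
  + by rewrite sort_uniq.
  + move=> s; rewrite mem_sort HS -sortd_mem.
    by rewrite -{1}(nat_of_strK s) mem_map //; exact: str_of_nat_inj.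
- exact: (sort_sorted shortlex_total S).
- apply: pairwise_sorted; rewrite (pairwise_map str_of_nat shortlex).
  apply: sub_pairwise Hpw => a b Hab.
  by rewrite /= shortlex_nat !str_of_natK ltnW.
Qed.

Lemma code_set_inj : injective code_set.
Proof.
move=> A B H.
have := congr1 dec_str H; rewrite /code_set !dec_enc => HS.
by apply/fsetP => z; rewrite -(mem_sort shortlex) HS mem_sort.
Qed.

Lemma size_enc_str s : size (enc_str s) = (size s).*2 + 2.
Proof.
rewrite /enc_str size_cat /=.
suff -> : size (flatten [seq [:: b; b] | b <- s]) = (size s).*2 by [].
by elim: s => //= b s ->; rewrite doubleS.
Qed.

Lemma size_str_of_nat n : size (str_of_nat n) <= clog n.
Proof.
have := nat_of_str_bounds (str_of_nat n); rewrite str_of_natK => /andP [H _].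
have H2 := @trunc_log_ltn 2 n (ltnSn 1).
have H3 : 2 ^ size (str_of_nat n) < 2 ^ (trunc_log 2 n).+2.
  by apply: (leq_ltn_trans H); rewrite [2 ^ (_.+2)]expnS; lia.
by rewrite /clog -ltnS -(ltn_exp2l _ _ (ltnSn 1)).
Qed.

Definition Fc (c : rcode) (p x : seq bool) : option (seq bool) :=
  match excluded_middle_informative
          (exists y, exists k, reval k c [:: nat_of_str p; nat_of_str x] = Some (nat_of_str y)) with
  | left H => Some (proj1_sig (constructive_indefinite_description _ H))
  | right _ => None
  end.

Lemma Fc_computes c : computes c (Fc c).
Proof.
move=> p x y; rewrite /Fc; case: excluded_middle_informative => [H|H].
  case: (constructive_indefinite_description _ H) => y0 /= [k0 Hk0].
  split; first by move=> [<-]; exists k0.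
  move=> [k Hk]; congr Some; apply: nat_of_str_inj; exact: reval_det Hk0 Hk.
split => // -[k Hk]; exfalso; apply: H; by exists y, k.
Qed.

Lemma Fc_val c p x y : ev c [:: nat_of_str p; nat_of_str x] (nat_of_str y) -> Fc c p x = Some y.
Proof. by move=> [k Hk]; apply/(Fc_computes c); exists k. Qed.

Lemma Fc_ev c p x N : ev c [:: nat_of_str p; nat_of_str x] N -> Fc c p x = Some (str_of_nat N).
Proof. by move=> H; apply: Fc_val; rewrite str_of_natK. Qed.

Local Open Scope fset_scope.

Theorem lemma4 :
  forall D : seq bool -> seq bool -> option (seq bool),
  universal D ->
  exists c : nat,
  forall (n : nat) (x : seq bool) (A : {fset seq bool}) (eps : nat),
    size x = n ->
    x \in A ->
    CT_le D (code_set A) x eps ->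
    exists (A1 : {fset seq bool}) (F : {fset {fset seq bool}}),
      is_partition F /\
      C_le D (code_fam F) (eps + c * clog n) /\
      (x \in A1 /\ CT_le D (code_set A1) x (eps + c * clog n)) /\
      (CT_lt D (code_set A) (code_set A1) (eps + c * clog n) /\
       CT_lt D (code_set A1) (code_set A) (eps + c * clog n)) /\
      #|` A1| <= #|` A| /\
      A1 \in F.
Proof.
move=> D [[cD HcD] Huniv].
pose cAA := compile cD 1 eG.
pose cAx := compile cD 1 eGx.
pose cBk := compile cD 1 eback.
pose cF := RComp (compile cD 1 eFmain)
  [:: RComp (compile cD 1 eP) [:: RZero; RProj 0]; RComp (compile cD 1 eN) [:: RZero; RProj 0]].
have [kAA HAA] := Huniv (Fc cAA) (ex_intro _ cAA (Fc_computes cAA)).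
have [kAx HAx] := Huniv (Fc cAx) (ex_intro _ cAx (Fc_computes cAx)).
have [kBk HBk] := Huniv (Fc cBk) (ex_intro _ cBk (Fc_computes cBk)).
have [kF HF] := Huniv (Fc cF) (ex_intro _ cF (Fc_computes cF)).
exists (kAA + kAx + kBk + kF + 4)%N.
move=> n x A eps Hn HxA [p [Hp [Htot HpA]]].
have Hcl : 0 < clog n by [].
pose Dt z := odflt [::] (D p z).
have HDt : forall z, D p z = Some (Dt z).
  by move=> z; rewrite /Dt; case E: (D p z) => [y|] //; have := Htot z; rewrite E.
pose d N := nat_of_str (Dt (str_of_nat N)).
have Hok : OK cD (nat_of_str p) d.
  move=> N; have /(HcD p) [k Hk] := HDt (str_of_nat N).
  by exists k; rewrite str_of_natK in Hk.
have Hev : forall e Z, ev (compile cD 1 e) [:: nat_of_str p; Z] (den d e [:: Z]).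
  by move=> e Z; apply: compile_ok => // _.
pose Kset w := seq_fset tt [seq z <- dec_str w | D p z == Some w].
have HmemK : forall w z, (z \in Kset w) = (z \in dec_str w) && (D p z == Some w).
  by move=> w z; rewrite seq_fsetE mem_filter andbC.
have HG : forall w, Gs d w = code_set (Kset w).
  move=> w; rewrite /Gs /code_set; congr enc_list; apply: sortd_sort.
    exact: fset_uniq.
  move=> s; rewrite HmemK mem_filter (mem_map nat_of_str_inj) /d nat_of_strK.
  by rewrite (inj_eq nat_of_str_inj) HDt (inj_eq (@Some_inj _)) andbC.
pose A1 := Kset (code_set A).
pose rng := rngl (2 ^ n).-1 (2 ^ n).
pose F := seq_fset tt [seq Kset (Dt (str_of_nat N)) | N <- rng].
have HA1x : x \in A1.
  by rewrite HmemK dec_enc mem_sort HxA HpA eqxx.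
have HA1sub : forall y, y \in A1 -> y \in A /\ D p y = Some (code_set A).
  move=> y; rewrite HmemK dec_enc mem_sort => /andP [-> /eqP ->]; done.
have HA1F : A1 \in F.
  rewrite seq_fsetE; apply/mapP; exists (nat_of_str x).
    rewrite mem_rngl; have := nat_of_str_bounds x; rewrite Hn expnS => /andP [H1 H2].
    have := expn_gt0 2 n; lia.
  by rewrite nat_of_strK /A1 /Dt HpA.
have Hpart : is_partition F.
  move=> K1 K2; rewrite !seq_fsetE => /mapP [N1 _ ->] /mapP [N2 _ ->].
  case/fset0Pn => y; rewrite in_fsetI !HmemK => /andP [/andP [_ /eqP H1] /andP [_ /eqP H2]].
  by move: H1; rewrite H2 => -[->].
have Hfam : Fs d n = code_fam F.
  rewrite /Fs /code_fam; congr enc_list; apply: sortd_sort.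
    by rewrite map_inj_uniq ?fset_uniq //; exact: code_set_inj.
  move=> s; rewrite (eq_mem_map code_set (seq_fsetE tt _)).
  rewrite -map_comp -(mem_map nat_of_str_inj) -map_comp.
  congr (_ \in _); apply: eq_map => N /=.
  by rewrite /d nat_of_strK HG.
pose sn := str_of_nat n.
pose q := enc_str sn ++ p.
have Hq : size q <= (clog n).*2 + 2 + eps.
  rewrite /q size_cat size_enc_str; have := size_str_of_nat n; rewrite -/sn; lia.
have HevF : ev cF [:: nat_of_str q; nat_of_str [::]] (nat_of_str (Fs d n)).
  apply: (ev_comp (w := [:: nat_of_str p; n])); last by rewrite -den_Fmain; apply: Hev.
  apply: evall_cons.
    apply: (ev_comp (w := [:: 0; nat_of_str q])).
      by apply: evall_cons; [apply: ev_zero | apply: evall_cons; [apply: ev_proj | apply: evall_nil]].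
    rewrite -(den_P d sn p); apply: compile_ok => //; by rewrite hO_P.
  apply: evall_cons; last exact: evall_nil.
  apply: (ev_comp (w := [:: 0; nat_of_str q])).
    by apply: evall_cons; [apply: ev_zero | apply: evall_cons; [apply: ev_proj | apply: evall_nil]].
  have -> : n = nat_of_str sn by rewrite str_of_natK.
  rewrite -(den_N d sn p); apply: compile_ok => //; by rewrite hO_N.
have [q' [Hq' Hq'D]] := HF q.
exists A1, F; split; first exact: Hpart.
split.
  exists q'; split; last by rewrite Hq'D (Fc_val HevF) Hfam.
  apply: (leq_trans Hq'); nia.
split.
  split; first exact: HA1x.
  have [q1 [Hq1 Hq1D]] := HAx p.
  exists q1; split; first by apply: (leq_trans Hq1); nia.
  split.
    by move=> z; rewrite Hq1D (Fc_ev (Hev eGx (nat_of_str z))).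
  rewrite Hq1D (Fc_ev (Hev eGx (nat_of_str x))) den_Gx.
  have -> : d (nat_of_str x) = nat_of_str (code_set A) by rewrite /d nat_of_strK /Dt HpA.
  by rewrite nat_of_strK HG nat_of_strK.
split; last by split; [apply: fsubset_leq_card; apply/fsubsetP => y /HA1sub [] | exact: HA1F].
split.
  have [q1 [Hq1 Hq1D]] := HBk p.
  exists q1; split; first by apply: (leq_ltn_trans Hq1); nia.
  split.
    by move=> z; rewrite Hq1D (Fc_ev (Hev eback (nat_of_str z))).
  rewrite Hq1D (Fc_ev (Hev eback _)) den_back /code_set dec_enc.
  case E: (sort shortlex A1) => [|y ys].
    by move: HA1x; rewrite -(mem_sort shortlex) E.
  have : y \in A1 by rewrite -(mem_sort shortlex) E mem_head.
  move=> /HA1sub [_ Hy].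
  rewrite map_cons lhead_cons.
  have -> : d (nat_of_str y) = nat_of_str (code_set A) by rewrite /d nat_of_strK /Dt Hy.
  by rewrite nat_of_strK.
have [q1 [Hq1 Hq1D]] := HAA p.
exists q1; split; first by apply: (leq_ltn_trans Hq1); nia.
split.
  by move=> z; rewrite Hq1D (Fc_ev (Hev eG (nat_of_str z))).
by rewrite Hq1D (Fc_ev (Hev eG _)) den_G HG nat_of_strK.
Qed.
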